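(* Let $m\ge0$ be an integer and write $s_n=s_n^{(1,m+2)}$. Then for all $n\ge0$ and $j=0,\ldots,m+1$, \[ s_{n(m+2)+j}^2=\delta_{j,0}+(1-\delta_{j,0})s_{j-1}^2+\sum_{k=1}^n\left\{s_{k(m+2)+j-1}^2+2\sum_{i=0}^{(k-1)(m+2)+j}P_{k(m+2)+j-1-i}^{\{-2,-1,m\}}s_i^2\right\}. \]
   Context: For positive integers $p<q$, $s_n^{(p,q)}$ is defined by $s_n^{(p,q)}=\delta_{0,n}+s_{n-p}^{(p,q)}+s_{n-q}^{(p,q)}$ for $n\ge0$ and $s_n^{(p,q)}=0$ for $n<0$. $\delta_{i,j}$ is $1$ if $i=j$ and $0$ otherwise. For a finite set $W$ of integers, $P_n^W$ is the number of permutations $\pi$ of $\{1,\dots,n\}$ with $\pi(i)-i\in W$ for all $i$ (the permanent of the $n\times n$ $(0,1)$ Toeplitz matrix whose $(i,j)$ entry is $1$ iff $j-i\in W$), with $P_0^W=1$. Empty sums are $0$. *)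

(* Defs.v *)
From mathcomp Require Import all_boot all_order all_algebra all_fingroup.
Set Implicit Arguments. Unset Strict Implicit. Unset Printing Implicit Defensive.
Import GRing.Theory.

(* s_n^{(p,q)} with s_n = 0 for n < 0; computed with fuel n.+1, which is
   sufficient since p >= 1 makes every recursive call decrease n. *)
Fixpoint s_fuel (p q fuel n : nat) : nat :=
  match fuel with
  | 0 => 0
  | f.+1 => (n == 0) + (if p <= n then s_fuel p q f (n - p) else 0)
                     + (if q <= n then s_fuel p q f (n - q) else 0)
  end.

Definition s (p q n : nat) : nat := s_fuel p q n.+1 n.

Definition Pperm (W : seq int) (n : nat) : nat :=
  #|[set sigma : 'S_n | [forall i : 'I_n, ((sigma i)%:Z - (i : nat)%:Z)%R \in W]]|.

(* Main.v *)
Require Import Defs.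
From mathcomp Require Import all_boot all_order all_algebra all_fingroup.
From mathcomp Require Import zify.
Set Implicit Arguments. Unset Strict Implicit. Unset Printing Implicit Defensive.

Lemma s_fuel_indep q f f' n : 1 < q -> n < f -> n < f' -> s_fuel 1 q f n = s_fuel 1 q f' n.
Proof.
move=> hq; elim: f f' n => [|f IH] [|f'] n //= hf hf'.
congr (_ + _ + _).
  by case: ifP => // h; apply: IH; lia.
by case: ifP => // h; apply: IH; lia.
Qed.

Lemma s_fuelS p q f n : s_fuel p q f.+1 n = (n == 0) + (if p <= n then s_fuel p q f (n - p) else 0)
                     + (if q <= n then s_fuel p q f (n - q) else 0).
Proof. by []. Qed.

Lemma sE q n : 1 < q -> s 1 q n = (n == 0) + (if 1 <= n then s 1 q (n - 1) else 0)
   + (if q <= n then s 1 q (n - q) else 0).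
Proof.
move=> hq; rewrite {1}/s s_fuelS; congr (_ + _ + _).
  by case: ifP => // h; rewrite /s; apply: s_fuel_indep => //; lia.
by case: ifP => // h; rewrite /s; apply: s_fuel_indep => //; lia.
Qed.

Section NatPart.
Variable m : nat.
Local Notation S n := (s 1 (m + 2) n).

Lemma sS n : S n.+1 = S n + (if m + 1 <= n then S (n - (m + 1)) else 0).
Proof.
rewrite sE; last lia.
have -> : n.+1 - 1 = n by lia.
case: ifP => h1; case: ifP => h2; try lia.
  have -> : n.+1 - (m + 2) = n - (m + 1) by lia. by [].
by [].
Qed.

Lemma s0 : S 0 = 1.
Proof. by rewrite sE ?addn2. Qed.

Lemma s_small n : n <= m + 1 -> S n = 1.
Proof.
elim: n => [|n IH] h; first exact: s0.
by rewrite sS IH; [case: ifP => //; lia | lia].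
Qed.

Lemma s_unroll M d : d <= m + 1 ->
  S (M + d) = S M + \sum_(m + 2 - d <= a < m + 2) (if a <= M then S (M - a) else 0).
Proof.
elim: d => [|d IH] hd.
  by rewrite addn0 subn0 big_geq // addn0.
rewrite (addnS M d) sS IH; last lia.
have -> : m + 2 - d.+1 = m + 1 - d by lia.
rewrite (@big_ltn_cond _ _ _ (m + 1 - d)); last lia.
have -> : (m + 1 - d).+1 = m + 2 - d by lia.
have E : (if m + 1 <= M + d then S (M + d - (m + 1)) else 0) =
   (if m + 1 - d <= M then S (M - (m + 1 - d)) else 0).
  have -> : (m + 1 <= M + d) = (m + 1 - d <= M) by lia.
  case: ifP => // h; have -> : M + d - (m + 1) = M - (m + 1 - d) by lia. by [].
rewrite E; lia.
Qed.

Fixpoint cf (fuel L lo : nat) : nat :=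
  match fuel with
  | 0 => 0
  | f.+1 => (L == 0) + \sum_(lo <= a < m + 2 | (0 < a) && (a <= L)) cf f (L - a) (m + 2 - a)
  end.

Lemma cf_indep f f' L lo : L < f -> L < f' -> cf f L lo = cf f' L lo.
Proof.
elim: f f' L lo => [|f IH] [|f'] L lo //= hf hf'.
congr (_ + _); apply: eq_bigr => a /andP [ha1 ha2]; apply: IH; lia.
Qed.

Definition C L lo := cf L.+1 L lo.

Lemma cfS f L lo : cf f.+1 L lo =
  (L == 0) + \sum_(lo <= a < m + 2 | (0 < a) && (a <= L)) cf f (L - a) (m + 2 - a).
Proof. by []. Qed.

Lemma CE L lo : C L lo = (L == 0) +
   \sum_(lo <= a < m + 2 | (0 < a) && (a <= L)) C (L - a) (m + 2 - a).
Proof.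
rewrite {1}/C cfS; congr (_ + _); apply: eq_bigr => a /andP [ha1 ha2]; rewrite /C; apply: cf_indep; lia.
Qed.

Lemma sum_trunc M a (F : nat -> nat) : a <= M ->
  \sum_(0 <= i < M.+1) (if a <= M - i then F i else 0) = \sum_(0 <= i < (M - a).+1) F i.
Proof.
move=> haM.
rewrite (@big_cat_nat _ _ _ (M - a).+1) //=; last lia.
have -> : \sum_((M - a).+1 <= i < M.+1) (if a <= M - i then F i else 0) = 0.
  rewrite big_nat_cond big1 // => i /andP [/andP [h1 h2] _]; case: ifP => //; lia.
rewrite addn0; apply: eq_big_nat => i /andP [h1 h2]; case: ifP => //; lia.
Qed.

Lemma TI M d : d <= m + 1 ->
  S (M + d) * S M = \sum_(0 <= i < M.+1) C (M - i) (m + 2 - d) * S i ^ 2.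
Proof.
elim/ltn_ind: M d => M IH d hd.
rewrite s_unroll // mulnDl big_distrl /=.
under [RHS]eq_bigr => i _ do rewrite CE mulnDl big_distrl /=.
rewrite big_split /=.
congr (_ + _).
  rewrite big_nat_recr //= subnn /= mul1n.
  rewrite big_nat_cond big1 ?add0n; first by rewrite expnS expn1.
  move=> i /andP [/andP [_ h] _]; have -> : (M - i == 0) = false by lia. by [].
rewrite (exchange_big_dep xpredT) //=.
apply: eq_big_nat => a /andP [ha1 ha2].
rewrite big_mkcond /=.
case: (leqP a M) => haM.
  have -> : S (M - a) * S M = S ((M - a) + a) * S (M - a).
    by rewrite subnK // mulnC.
  rewrite IH; [|lia|lia].
  rewrite -(sum_trunc _ haM).
  apply: eq_bigr => i _.
  have -> : (0 < a) && (a <= M - i) = (a <= M - i) by lia.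
  by case: ifP => // h; have -> : M - a - i = M - i - a by lia.
rewrite mul0n big1 // => i _.
by case: ifP => //; lia.
Qed.

End NatPart.

Section Perm.
Variables m n : nat.
Local Notation W := [:: (-2 : int)%R; (-1 : int)%R; Posz m].

Lemma inW (a b : nat) : (((Posz a - Posz b)%R \in W) = [|| a == b + m, a.+1 == b | a.+2 == b]).
Proof.
rewrite !inE.
apply/idP/idP.
  case/or3P => /eqP h; lia.
case/or3P => /eqP h; lia.
Qed.

Definition valid (sg : 'S_n) := [forall i : 'I_n, ((sg i)%:Z - (i : nat)%:Z)%R \in W].

Lemma validP sg : valid sg -> forall i : 'I_n,
  [\/ sg i = i + m :> nat, (sg i).+1 = i | (sg i).+2 = i].
Proof.
move=> /forallP h i; move: (h i); rewrite inW.
by case/or3P => /eqP e; [apply: Or31 | apply: Or32 | apply: Or33].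
Qed.

Definition up (sg : 'S_n) (u : nat) : bool :=
  [exists i : 'I_n, (nat_of_ord i == u) && (sg i == i + m :> nat)].

Lemma upE sg (i : 'I_n) : up sg i = (sg i == i + m :> nat).
Proof.
apply/existsP/idP => [[j /andP [/eqP e h]]|h]; last by exists i; rewrite eqxx.
by have -> : i = j by apply: val_inj.
Qed.

Lemma upP sg u : up sg u -> exists2 i : 'I_n, nat_of_ord i = u & sg i = i + m :> nat.
Proof. by case/existsP => i /andP [/eqP e /eqP h]; exists i. Qed.

Lemma up_lt sg u : up sg u -> u < n.
Proof. by case/upP => i <- _. Qed.

Lemma cut_balance (sg : 'S_n) c :
  #|[set i : 'I_n | (i < c) && (c <= sg i)]| = #|[set i : 'I_n | (c <= i) && (sg i < c)]|.
Proof.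
pose A := [set i : 'I_n | i < c].
pose B := [set i : 'I_n | sg i < c].
have hB : B = sg @^-1: A by apply/setP => i; rewrite !inE.
have cB : #|B| = #|A| by rewrite hB card_preimset //; exact: perm_inj.
have e1 := cardsID B A; have e2 := cardsID A B.
have -> : [set i : 'I_n | (i < c) && (c <= sg i)] = A :\: B.
  by apply/setP => i; rewrite !inE -leqNgt andbC.
have -> : [set i : 'I_n | (c <= i) && (sg i < c)] = B :\: A.
  by apply/setP => i; rewrite !inE -leqNgt andbC.
rewrite setIC in e2; lia.
Qed.

Lemma rhs_pos sg c (i : 'I_n) : valid sg -> c <= i -> sg i < c -> i <= c.+1.
Proof. move=> v h1 h2; case: (validP v i); lia. Qed.

Lemma V2 sg c : valid sg -> c < n -> ~~ up sg c ->
  exists2 u, up sg u & (c <= u + m) && (u < c).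
Proof.
move=> v hc hnu; pose i := Ordinal hc.
have hi : sg i < c.
  move: hnu; rewrite (upE sg i) => hnu; case: (validP v i) => /= e; [by rewrite e eqxx in hnu|lia|lia].
have : 0 < #|[set i : 'I_n | (c <= i) && (sg i < c)]|.
  by apply/card_gt0P; exists i; rewrite inE /= leqnn hi.
rewrite -cut_balance => /card_gt0P [j]; rewrite inE => /andP [h1 h2].
case: (validP v j) => e; last lia; last lia.
exists j; last lia.
by rewrite upE e eqxx.
Qed.

Lemma V3 sg u u' u'' : valid sg -> up sg u -> up sg u' -> up sg u'' -> u < u' -> u' < u'' ->
  u + m + 2 <= u''.
Proof.
move=> v /upP [i ei hi] /upP [i' ei' hi'] /upP [i'' ei'' hi''] h1 h2.
rewrite leqNgt; apply/negP => h3.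
have rhs_le : forall j : 'I_n, j \in [set i : 'I_n | (u'' <= i) && (sg i < u'')] ->
    nat_of_ord j = u''.+1.
  move=> j; rewrite inE => /andP [hj1 hj2].
  have hr := rhs_pos v hj1 hj2.
  have : nat_of_ord j != u''.
    apply/negP => /eqP e; have ej : j = i'' by apply: val_inj; rewrite /= e ei''.
    by move: hj2; rewrite ej hi''; lia.
  lia.
case: (leqP u'' (u + m)) => h4.
  have : 1 < #|[set i : 'I_n | (u'' <= i) && (sg i < u'')]|.
    rewrite -cut_balance; apply/card_gt1P; exists i, i'; rewrite !inE; split.
    - by apply/andP; split; lia.
    - by apply/andP; split; lia.
    - by apply/eqP => e; move: h1; rewrite -ei -ei' e ltnn.
  case/card_gt1P => [j [j' [hj hj' ne]]].
  move: (rhs_le _ hj) (rhs_le _ hj') => e e'.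
  by move/eqP: ne; apply; apply: val_inj; rewrite /= e e'.
have : 0 < #|[set i : 'I_n | (u'' <= i) && (sg i < u'')]|.
  rewrite -cut_balance; apply/card_gt0P; exists i'; rewrite !inE.
  by apply/andP; split; lia.
case/card_gt0P => j hj; have ej := rhs_le _ hj.
move: hj; rewrite inE => /andP [_ hj].
have : sg j = sg i.
  apply: val_inj => /=; case: (validP v j) => e; lia.
move/perm_inj => eji; move: ej; rewrite eji; lia.
Qed.

Lemma uniq_key (sg tau : 'S_n) (i : 'I_n) : valid sg -> valid tau ->
  (forall j : 'I_n, j < i -> sg j = tau j) -> (sg i).+2 = i -> (tau i).+1 = i -> False.
Proof.
move=> vs vt hlt e1 e2.
pose j := (tau^-1)%g (sg i).
have tj : tau j = sg i by rewrite /j permKV.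
case: (ltngtP j i) => hji.
- have := hlt j hji; rewrite tj => /perm_inj eji; move: hji; rewrite eji ltnn //.
- have tjn : (tau j : nat) = sg i by rewrite tj.
  case: (validP vt j) => e; lia.
- have : j = i by apply: val_inj.
  move=> eji; move: tj; rewrite eji => tj; move: e1 e2; rewrite tj; lia.
Qed.

Lemma uniq_perm_up (sg tau : 'S_n) : valid sg -> valid tau ->
  (forall u, up sg u = up tau u) -> sg = tau.
Proof.
move=> vs vt hup.
suff H : forall k (i : 'I_n), i < k -> sg i = tau i.
  by apply/permP => i; apply: (H i.+1).
elim=> [|k IH] i //; rewrite ltnS leq_eqVlt => /orP [/eqP ek|]; last exact: IH.
have hlt : forall j : 'I_n, j < i -> sg j = tau j by move=> j hj; apply: IH; lia.
have hlt' : forall j : 'I_n, j < i -> tau j = sg j by move=> j hj; rewrite hlt.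
have E : (sg i : nat) = tau i -> sg i = tau i by move=> h; apply: val_inj.
have := hup i; rewrite !upE.
case: (validP vs i) => es; case: (validP vt i) => et => hu;
  try (apply: E; lia).
all: try (move: hu; rewrite es et; case: eqP; case: eqP; lia).
all: exfalso; first [exact: (uniq_key vt vs hlt' et es) | exact: (uniq_key vs vt hlt es et)].
Qed.
End Perm.

Definition nice0 m N (f : nat -> bool) : Prop :=
 [/\ forall u, f u -> u + m < N,
     forall c, c < N -> ~~ f c -> exists2 u, f u & (c <= u + m) && (u < c) &
     forall u u' u'', f u -> f u' -> f u'' -> u < u' -> u' < u'' -> u + m + 2 <= u''].

Section Constr.
Variables m n : nat.
Variable f : nat -> bool.

Definition dbl c := [exists u : 'I_c, exists u' : 'I_c, [&& u < u', c <= u + m, f u & f u']].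

Lemma dblP c : reflect (exists u u', [/\ u < u', u' < c, c <= u + m, f u & f u']) (dbl c).
Proof.
apply: (iffP idP).
  case/existsP => u /existsP [u' /and4P [h1 h2 h3 h4]].
  by exists u, u'; split.
case=> u [u' [h1 h2 h3 h4 h5]].
have hu : u < c by lia.
apply/existsP; exists (Ordinal hu); apply/existsP; exists (Ordinal h2).
by apply/and4P; split.
Qed.

Definition gv c := if f c then c + m else if dbl c || ((m < c) && f (c - m - 1)) then c - 2 else c - 1.

Lemma gv_lt (H : nice0 m n f) c : c < n -> gv c < n.
Proof.
case: H => H1 H2 H3 hc; rewrite /gv; case: ifP => h; first exact: H1.
case: ifP => _; lia.
Qed.

Lemma gv_down (H : nice0 m n f) c : c < n -> ~~ f c -> (gv c).+1 = c \/ (gv c).+2 = c.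
Proof.
case: H => H1 H2 H3 hc hf; rewrite /gv (negbTE hf).
have [u hu /andP [hu1 hu2]] := H2 c hc hf.
case: ifP => [/orP [/dblP [v [v' [h1 h2 h3 h4 h5]]] | /andP [h1 h2]] | _]; lia.
Qed.

Lemma gv_inj (H : nice0 m n f) c c' : c < n -> c' < n -> gv c = gv c' -> c = c'.
Proof.
move=> hc hc'.
wlog lt : c c' hc hc' / c <= c'.
  move=> Hw e; case: (leqP c c') => h; first exact: Hw.
  by symmetry; apply: Hw => //; lia.
move=> e; rewrite leq_eqVlt in lt; case/orP: lt => [/eqP //|lt]; exfalso.
have H' := H; case: H' => H1 H2 H3.
case fc: (f c); case fc': (f c').
- by move: e; rewrite /gv fc fc'; lia.
- have [u hu /andP [hu1 hu2]] := H2 c' hc' (negbT fc').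
  move: e; rewrite /gv fc fc'.
  case: ifP => [/orP [/dblP [v [v' [h1 h2 h3 h4 h5]]] | /andP [h1 h2]] | /norP [_ hn]] e.
  + have := H3 c v v' fc h4 h5; lia.
  + have ec : c' - m - 1 = c + 1 by lia.
    rewrite ec in h2.
    have := H3 c (c + 1) u fc h2 hu; lia.
  + have ec : c' - m - 1 = c by lia.
    move: hn; rewrite ec fc andbT; lia.
- have [u hu /andP [hu1 hu2]] := H2 c hc (negbT fc).
  move: e; rewrite /gv fc fc'; case: ifP => _; lia.
- have [u hu /andP [hu1 hu2]] := H2 c hc (negbT fc).
  have [u' hu' /andP [hu1' hu2']] := H2 c' hc' (negbT fc').
  move: e; rewrite /gv fc fc'.
  have c2 : forall x, x < n -> ~~ f x -> dbl x || ((m < x) && f (x - m - 1)) -> 1 < x.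
    move=> x hx fx /orP [/dblP [v [v' [h1 h2 h3 h4 h5]]] | /andP [h1 h2]]; first lia.
    have [w hw /andP [hw1 hw2]] := H2 x hx fx; lia.
  case: ifP => [/(c2 c hc (negbT fc)) hc2|/norP [hd hn]]; case: ifP => [/orP [/dblP [v [v' [h1 h2 h3 h4 h5]]] | /andP [h1 h2]] | _] e; try lia.
  + have ec' : c' = c.+1 by lia.
    have hv' : v' != c by apply/eqP => e'; rewrite e' fc in h5.
    move/negP: hd; apply; apply/dblP; exists v, v'; split => //; lia.
  + have ec' : c' = c.+1 by lia.
    have hu'c : u' != c by apply/eqP => e'; rewrite e' fc in hu'.
    move/negP: hd; apply; apply/dblP; exists (c - m), u'; split => //; try lia.
    by move: h2; rewrite ec'; have -> : c.+1 - m - 1 = c - m by lia.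
Qed.

Definition gfun (H : nice0 m n f) : {ffun 'I_n -> 'I_n} :=
  [ffun i : 'I_n => Ordinal (gv_lt H (ltn_ord i))].

Lemma gfun_inj (H : nice0 m n f) : injective (gfun H).
Proof.
move=> i j; rewrite !ffunE => /(congr1 val) /= e.
by apply: val_inj; exact: (gv_inj H (ltn_ord i) (ltn_ord j) e).
Qed.

Definition gperm (H : nice0 m n f) : 'S_n := perm (@gfun_inj H).

Lemma gperm_val (H : nice0 m n f) (i : 'I_n) : (gperm H i : nat) = gv i.
Proof. by rewrite /gperm permE ffunE. Qed.

Lemma gperm_valid (H : nice0 m n f) : valid m (gperm H).
Proof.
apply/forallP => i; rewrite inW gperm_val.
case fi: (f i); first by rewrite /gv fi eqxx.
case: (gv_down H (ltn_ord i) (negbT fi)) => ->; rewrite eqxx; lia.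
Qed.

Lemma gperm_up (H : nice0 m n f) u : up m (gperm H) u = f u.
Proof.
case: (ltnP u n) => hu.
  rewrite (upE m (gperm H) (Ordinal hu)) gperm_val /=.
  case fi: (f u); first by rewrite /gv fi eqxx.
  case: (gv_down H hu (negbT fi)) => e; apply/eqP; lia.
case fu: (f u).
  by have [H1 _ _] := H; have := H1 u fu; lia.
by apply/negbTE/negP => /up_lt; lia.
Qed.

End Constr.

Definition nice m N lo (f : nat -> bool) : Prop :=
  nice0 m N f /\ (forall u, f u -> 0 < u -> lo <= u).

Section Words.
Variable m : nat.

Definition pre a (g : nat -> bool) (u : nat) : bool :=
  if u == 0 then true else if u < a then false else g (u - a).

Lemma nice_cons L a lo g : 0 < a -> a <= m + 1 -> lo <= a -> 0 < L + a ->
  nice m (L + m + 1) (m + 2 - a) g -> nice m (L + a + m + 1) lo (pre a g).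
Proof.
move=> ha1 ha2 hlo hL [[H1 H2 H3] H4]; split; first split.
- move=> u; rewrite /pre; case: eqP => [->|hu]; first lia.
  case: ifP => // hua /H1; lia.
- move=> c hc; rewrite /pre; case: eqP => // hc0; case: ifP => hca.
    by move=> _; exists 0; rewrite /pre ?eqxx //; lia.
  move=> hg; have [u hu /andP [hu1 hu2]] := H2 (c - a) ltac:(lia) hg.
  exists (u + a); last lia.
  by rewrite /pre; case: eqP => [|_]; [lia|]; rewrite ifN; [rewrite addnK|lia].
- move=> u u' u''; rewrite /pre.
  case: (eqP : reflect (u = 0) (u == 0)) => [-> _|hu0].
    case: eqP => [e1|n1]; first lia.
    case: ifP => // i1 hu'; case: eqP => [e2|n2]; first lia.
    case: ifP => // i2 hu'' h1 h2.
    have := H4 (u'' - a) hu'' ltac:(lia); lia.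
  case: ifP => // i0 hu; case: eqP => [e1|n1]; first lia.
  case: ifP => // i1 hu'; case: eqP => [e2|n2]; first lia.
  case: ifP => // i2 hu'' h1 h2.
  have := H3 _ _ _ hu hu' hu'' ltac:(lia) ltac:(lia); lia.
- move=> u; rewrite /pre; case: eqP => [|_]; first lia.
  case: ifP => // h _ _; lia.
Qed.

Lemma nice0_f0 N f : 0 < N -> nice0 m N f -> f 0.
Proof.
move=> hN [H1 H2 H3]; apply/negPn/negP => h.
by have [u _ /andP [_ hu]] := H2 0 hN h.
Qed.

Lemma nice_decons N lo F : m + 1 < N -> nice m N lo F ->
  exists a, [/\ (lo <= a) && (a <= m + 1), 0 < a, a + m + 1 <= N, F a &
   (forall u, 0 < u -> u < a -> F u = false)] /\
   nice m (N - a) (m + 2 - a) (fun u => F (a + u)).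
Proof.
move=> hN [[H1 H2 H3] H4].
have F0 : F 0.
  apply: (nice0_f0 (N := N)); first lia.
  by split.
have ex : exists u, (0 < u) && F u.
  case Fm: (F (m + 1)); first by exists (m + 1); rewrite Fm andbT; lia.
  have [u hu /andP [hu1 hu2]] := H2 (m + 1) hN (negbT Fm).
  by exists u; rewrite hu andbT; lia.
case: (ex_minnP ex) => a /andP [ha0 Fa'] amin.
have hlo := H4 _ Fa' ha0.
have hle : a <= m + 1.
  case Fm: (F (m + 1)); first by apply: amin; rewrite Fm andbT; lia.
  have [u hu /andP [hu1 hu2]] := H2 (m + 1) hN (negbT Fm).
  have := amin u; rewrite hu andbT; lia.
exists a; split; first split => //.
- lia.
- have := H1 a Fa'; lia.
- move=> u hu0 hua; apply/negbTE/negP => Fu.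
  by have := amin u; rewrite Fu andbT; lia.
split; first split.
- move=> u /H1; lia.
- move=> c hc hFc; have [u hu /andP [hu1 hu2]] := H2 (a + c) ltac:(lia) hFc.
  case: (leqP a u) => hau.
    by exists (u - a); [rewrite subnKC | lia].
  have u0 : u = 0.
    case: (posnP u) => // hu0; have := amin u; rewrite hu hu0 /=; lia.
  case: (posnP c) => hc0.
    by move: hFc; rewrite hc0 addn0 Fa'.
  by exists 0; [rewrite addn0 | lia].
- move=> u u' u'' h h' h'' h1 h2; have := H3 _ _ _ h h' h'' ltac:(lia) ltac:(lia); lia.
- move=> u hu hu0; have := H3 0 a (a + u) F0 Fa' hu ltac:(lia) ltac:(lia); lia.
Qed.


Lemma nice_ext N lo f g : f =1 g -> nice m N lo f -> nice m N lo g.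
Proof.
move=> E [[H1 H2 H3] H4]; split; first split.
- by move=> u; rewrite -E; apply: H1.
- by move=> c hc; rewrite -E => /(H2 c hc) [u hu hu']; exists u; rewrite -?E.
- by move=> u u' u''; rewrite -!E; apply: H3.
- by move=> u; rewrite -E; apply: H4.
Qed.

Definition ps a : seq bool := true :: nseq a.-1 false.

Arguments ps : simpl never.

Lemma size_ps a : 0 < a -> size (ps a) = a.
Proof. by case: a => // a _; rewrite /ps /= size_nseq. Qed.

Lemma nth_ps a w u : 0 < a -> nth false (ps a ++ w) u = pre a (nth false w) u.
Proof.
move=> ha; rewrite nth_cat size_ps // /pre.
case: u => [|u] /=; first by rewrite ha.
case: ifP => hu; last by [].
by rewrite nth_nseq; case: ifP.
Qed.

Fixpoint wl (fuel L lo : nat) : seq (seq bool) :=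
  match fuel with
  | 0 => [::]
  | f.+1 => if L == 0 then [:: true :: nseq m false] else
      flatten [seq [seq ps a ++ w | w <- wl f (L - a) (m + 2 - a)]
                 | a <- [seq a <- index_iota lo (m + 2) | (0 < a) && (a <= L)]]
  end.

Lemma nth_base u : nth false (true :: nseq m false) u = (u == 0).
Proof. by case: u => //= u; rewrite nth_nseq; case: ifP. Qed.

Lemma wl_nice fuel L lo w : L < fuel -> w \in wl fuel L lo ->
  size w = L + m + 1 /\ nice m (L + m + 1) lo (nth false w).
Proof.
elim: fuel L lo w => [|fuel IH] L lo w //= hL.
case: eqP => [-> | hL0].
  rewrite inE => /eqP ->; split; first by rewrite /= size_nseq; lia.
  apply: (@nice_ext _ _ (fun u => u == 0)); first by move=> u; rewrite nth_base.
  split; first split.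
  - move=> u /eqP ->; lia.
  - move=> c hc hc0; exists 0 => //; lia.
  - move=> u u' u'' _ /eqP -> _; lia.
  - move=> u /eqP ->; lia.
case/flatten_mapP => a; rewrite mem_filter mem_index_iota => /andP [/andP [ha0 haL] /andP [hlo ham]].
case/mapP => w' hw' ->.
have [sw' nw'] := IH (L - a) (m + 2 - a) w' ltac:(lia) hw'.
rewrite -[true :: (nseq a.-1 false ++ w')]/(ps a ++ w').
split; first by rewrite size_cat size_ps // sw'; lia.
have := nice_cons ha0 ltac:(lia) hlo ltac:(lia) nw'.
have -> : L - a + a + m + 1 = L + m + 1 by lia.
by apply: nice_ext => u; rewrite nth_ps.
Qed.

Lemma nice_wl fuel L lo w : L < fuel -> size w = L + m + 1 ->
  nice m (L + m + 1) lo (nth false w) -> w \in wl fuel L lo.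
Proof.
elim: fuel L lo w => [|fuel IH] L lo w //= hL sw hn.
case: eqP => [eL | hL0].
  rewrite inE; apply/eqP/(@eq_from_nth _ false); first by rewrite sw /= size_nseq eL; lia.
  move=> u hu; rewrite nth_base.
  case: (posnP u) => [-> | hu0].
    by apply: (nice0_f0 (N := L + m + 1)); [lia | case: hn].
  apply/negbTE/negP => hw; case: hn => [[H1 _ _] _]; have := H1 u hw; lia.
have [a [[/andP [hlo ham] ha0 haN Fa Fmid] hn']] := @nice_decons (L + m + 1) lo (nth false w) ltac:(lia) hn.
have F0 : nth false w 0 by apply: (nice0_f0 (N := L + m + 1)); [lia | case: hn].
have hd : drop a w \in wl fuel (L - a) (m + 2 - a).
  apply: IH; first lia.
    by rewrite size_drop sw; lia.
  have -> : L - a + m + 1 = L + m + 1 - a by lia.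
  by apply: nice_ext hn' => u; rewrite nth_drop.
apply/flatten_mapP; exists a.
  by rewrite mem_filter mem_index_iota; apply/andP; split; apply/andP; split; lia.
apply/mapP; exists (drop a w) => //.
rewrite -[true :: (nseq a.-1 false ++ drop a w)]/(ps a ++ drop a w).
rewrite -{1}(cat_take_drop a w); congr (_ ++ _).
apply: (@eq_from_nth _ false); first by rewrite size_takel ?size_ps //; lia.
move=> u; rewrite size_takel; last lia.
move=> hu; rewrite nth_take //.
case: u hu => [|u] hu /=; first by [].
by rewrite nth_nseq ifT ?Fmid //; lia.
Qed.

End Words.

Lemma uniq_flat (T I : eqType) (s : seq I) (F : I -> seq T) : uniq s ->
  (forall i, i \in s -> uniq (F i)) ->
  (forall i j x, i \in s -> j \in s -> x \in F i -> x \in F j -> i = j) ->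
  uniq (flatten [seq F i | i <- s]).
Proof.
elim: s => [|i s IH] //= /andP [his us] hu hd.
rewrite cat_uniq hu ?mem_head //= IH //; last first.
- by move=> a b x ha hb; apply: hd; rewrite inE ?ha ?hb orbT.
- by move=> a ha; apply: hu; rewrite inE ha orbT.
rewrite andbT; apply/hasPn => x /flatten_mapP [j hj hxj]; apply/negP => hxi.
have eij := hd i j x (mem_head _ _) ltac:(by rewrite inE hj orbT) hxi hxj.
by move: his; rewrite eij hj.
Qed.

Section Count.
Variable m : nat.

Lemma wl_head fuel L lo w : w \in wl m fuel L lo -> nth false w 0.
Proof.
case: fuel => [|fuel] //=; case: eqP => _; first by rewrite inE => /eqP ->.
case/flatten_mapP => a; rewrite mem_filter => /andP [/andP [ha0 _] _].
by case/mapP => w' _ ->; rewrite -[true :: (nseq a.-1 false ++ w')]/(ps a ++ w') nth_ps.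
Qed.

Lemma wl_uniq fuel L lo : uniq (wl m fuel L lo).
Proof.
elim: fuel L lo => [|fuel IH] L lo //=; case: eqP => // hL.
apply: uniq_flat.
- by rewrite filter_uniq // iota_uniq.
- move=> a _; rewrite map_inj_uniq // => x y [] /eqP.
  by rewrite eqseq_cat // => /andP [_ /eqP].
move=> a b x; rewrite !mem_filter => /andP [/andP [ha0 _] _] /andP [/andP [hb0 _] _].
case/mapP => w1 h1 -> /mapP [w2 h2].
rewrite -[true :: (nseq a.-1 false ++ w1)]/(ps a ++ w1).
rewrite -[true :: (nseq b.-1 false ++ w2)]/(ps b ++ w2).
move=> e; have := congr1 (fun x => nth false x a) e; have := congr1 (fun x => nth false x b) e.
rewrite /= !nth_ps // /pre.
have a0 : (a == 0) = false by lia.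
have b0 : (b == 0) = false by lia.
rewrite a0 b0 !ltnn !subnn (wl_head h1) (wl_head h2).
by case: (ltngtP a b).
Qed.

Lemma wl_size fuel L lo : size (wl m fuel L lo) = cf m fuel L lo.
Proof.
elim: fuel L lo => [|fuel IH] L lo //=; case: eqP => hL.
  by rewrite big1 // => a; lia.
rewrite size_flatten /shape -map_comp sumnE big_map big_filter /= add0n.
by apply: eq_bigr => a _; rewrite size_map IH.
Qed.

Lemma valid_nice n (sg : 'S_n) : valid m sg -> nice m n 1 (up m sg).
Proof.
move=> v; split; last by move=> u _; lia.
split.
- by move=> u /upP [i <- e]; rewrite -e.
- by move=> c hc hu; apply: V2.
- by move=> u u' u'' h h' h'' h1 h2; apply: (V3 v h h' h'' h1 h2).
Qed.

End Count.

Lemma Pperm_C m N : m + 1 <= N ->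
  Pperm [:: (-2 : int)%R; (-1 : int)%R; Posz m] N = C m (N - (m + 1)) 1.
Proof.
move=> hN; set L := N - (m + 1).
have eN : N = L + m + 1 by rewrite /L; lia.
rewrite /C -wl_size /Pperm cardE.
pose word (sg : 'S_N) := mkseq (up m sg) N.
have nthw sg u : nth false (word sg) u = up m sg u.
  case: (ltnP u N) => hu; first by rewrite nth_mkseq.
  rewrite nth_default ?size_mkseq //.
  by apply/esym/negbTE/negP => /up_lt; lia.
rewrite -(size_map word); apply: perm_size; apply: uniq_perm.
- rewrite map_inj_in_uniq ?enum_uniq // => x y; rewrite !mem_enum !inE => vx vy e.
  by apply: (uniq_perm_up vx vy) => u; rewrite -!nthw e.
- exact: wl_uniq.
move=> w; apply/mapP/idP.
  case=> sg; rewrite mem_enum inE => v ->.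
  apply: nice_wl => //; first by rewrite size_mkseq.
  rewrite -eN; apply: (@nice_ext _ _ _ (up m sg)); first by move=> u; rewrite nthw.
  exact: valid_nice.
move=> hw; have [sw nw] := wl_nice (ltnSn L) hw.
rewrite -eN in nw sw; case: nw => H _.
exists (gperm H); first by rewrite mem_enum inE; apply: gperm_valid.
apply: (@eq_from_nth _ false); first by rewrite size_mkseq.
by move=> u _; rewrite nthw gperm_up.
Qed.
Lemma step m N : m + 2 <= N ->
  s 1 (m + 2) N ^ 2 = s 1 (m + 2) (N - (m + 2)) ^ 2 + (s 1 (m + 2) (N - 1) ^ 2
    + 2 * \sum_(0 <= i < (N - (m + 2)).+1)
        Pperm [:: (-2 : int)%R; (-1 : int)%R; Posz m] (N - 1 - i) * s 1 (m + 2) i ^ 2).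
Proof.
move=> hN.
have e1 : N = (N - (m + 2)) + (m + 1) + 1 by lia.
have HS : s 1 (m + 2) N = s 1 (m + 2) (N - 1) + s 1 (m + 2) (N - (m + 2)).
  rewrite {1}e1 addn1 sS; have -> : N - (m + 2) + (m + 1) = N - 1 by lia.
  case: ifP => h; last lia.
  by have -> : N - 1 - (m + 1) = N - (m + 2) by lia.
have HT := @TI m (N - (m + 2)) (m + 1) (leqnn (m + 1)).
rewrite (_ : N - (m + 2) + (m + 1) = N - 1) in HT; last lia.
rewrite (_ : m + 2 - (m + 1) = 1) in HT; last lia.
have E : \sum_(0 <= i < (N - (m + 2)).+1)
        Pperm [:: (-2 : int)%R; (-1 : int)%R; Posz m] (N - 1 - i) * s 1 (m + 2) i ^ 2
   = \sum_(0 <= i < (N - (m + 2)).+1) C m (N - (m + 2) - i) 1 * s 1 (m + 2) i ^ 2.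
  apply: eq_big_nat => i /andP [_ hi]; rewrite Pperm_C; last lia.
  by have -> : N - 1 - i - (m + 1) = N - (m + 2) - i by lia.
rewrite E -HT HS; set x := s 1 (m + 2) (N - 1); set y := s 1 (m + 2) (N - (m + 2)).
rewrite !expnS !expn0 !muln1; lia.
Qed.

Theorem mainTheorem8 (m n j : nat) (hj : j <= m + 1) :
  s 1 (m + 2) (n * (m + 2) + j) ^ 2 =
    (j == 0) + (1 - (j == 0)) * s 1 (m + 2) (j - 1) ^ 2
    + \sum_(1 <= k < n.+1)
        (s 1 (m + 2) (k * (m + 2) + j - 1) ^ 2
         + 2 * \sum_(0 <= i < ((k - 1) * (m + 2) + j).+1)
                 Pperm [:: (-2 : int)%R; (-1 : int)%R; Posz m] (k * (m + 2) + j - 1 - i)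
                 * s 1 (m + 2) i ^ 2).
Proof.
elim: n => [|n IH].
  rewrite big_geq // addn0 mul0n add0n s_small //.
  case: j hj => [|j] hj /=; first by rewrite subnn mul0n.
  by rewrite subn0 mul1n s_small //; lia.
rewrite big_nat_recr //= addnA -IH.
rewrite (step (N := n.+1 * (m + 2) + j)); last lia.
have -> : n.+1 * (m + 2) + j - (m + 2) = n * (m + 2) + j by rewrite mulSn; lia.
have -> : n.+1 - 1 = n by lia.
by [].
Qed.
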